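(* If $f$ is $L$-smooth, then Muon with exact polar decomposition satisfies, for every $K\ge1$, $$\eta\sum_{k=0}^{K-1}\mathbb E\|\nabla f({\bm{X}}_k)\|_F\le f({\bm{X}}_0)-f_\star+\frac{Ld_0}{2}K\eta^2+\eta(1+\sqrt{d_0})\sum_{k=0}^{K-1}\mathbb E\|{\bm{S}}_k\|_F.$$
   Context: Norms on $\mathbb{R}^{m\times n}$: $\|\cdot\|_F$ Frobenius, $\|\cdot\|_{\mathrm{op}}$ spectral, $\|\cdot\|_*$ nuclear; $d_0:=\min\{m,n\}$. $f:\mathbb{R}^{m\times n}\to\mathbb R$ is differentiable with $f\ge f_\star>-\infty$; $L$-smooth means $\|\nabla f({\bm{X}})-\nabla f({\bm{Y}})\|_F\le L\|{\bm{X}}-{\bm{Y}}\|_F$ for all ${\bm{X}},{\bm{Y}}$. Muon: given $\beta\in(0,1)$, $\eta>0$, $B\in\mathbb N$, initial ${\bm{X}}_0,{\bm{C}}_{-1}$, for $k=0,1,\dots$: ${\bm{G}}_k=\frac1B\sum_{i=1}^B{\bm{G}}_k^i$ (stochastic gradient estimates), ${\bm{C}}_k=\beta{\bm{C}}_{k-1}+{\bm{G}}_k$, ${\bm{M}}_k=\beta{\bm{C}}_k+{\bm{G}}_k$, ${\bm{X}}_{k+1}={\bm{X}}_k-\eta\mathcal T({\bm{M}}_k)$, where with exact polar decomposition $\mathcal T({\bm{M}})={\bm{U}}{\bm{V}}^\top$ for a compact SVD ${\bm{M}}={\bm{U}}\bm\Sigma{\bm{V}}^\top$ ($\mathcal T(\mathbf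 0)=\mathbf 0$). $\widetilde{{\bm{M}}}_k:=(1-\beta){\bm{M}}_k$, ${\bm{S}}_k:=\widetilde{{\bm{M}}}_k-\nabla f({\bm{X}}_k)$. All expectations are assumed finite. *)

(* Defs.v *)
From HB Require Import structures.
From mathcomp Require Import all_boot all_order all_algebra.
From mathcomp Require Import all_classical all_reals all_analysis.
Set Implicit Arguments. Unset Strict Implicit. Unset Printing Implicit Defensive.
Import Order.TTheory GRing.Theory Num.Theory.
Import numFieldNormedType.Exports.
Local Open Scope ring_scope.

Section Defs.
Context {R : realType} {m n : nat}.

Definition frob_inner (A B : 'M[R]_(m, n)) : R :=
  \sum_(i < m) \sum_(j < n) A i j * B i j.

Definition frob (A : 'M[R]_(m, n)) : R := Num.sqrt (frob_inner A A).

Definition is_compact_svd (M : 'M[R]_(m, n)) (r : nat)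
  (U : 'M[R]_(m, r)) (s : 'rV[R]_r) (V : 'M[R]_(n, r)) : Prop :=
  [/\ U^T *m U = 1%:M, V^T *m V = 1%:M, (forall i, 0 < s 0 i)
    & M = U *m diag_mx s *m V^T].

(* P = T(M) = U V^T for a compact SVD of M (exact polar factor);
   for M = 0 the compact SVD has r = 0, giving P = 0. *)
Definition is_polar_factor (M P : 'M[R]_(m, n)) : Prop :=
  exists (r : nat) (U : 'M[R]_(m, r)) (s : 'rV[R]_r) (V : 'M[R]_(n, r)),
    is_compact_svd M U s V /\ P = U *m V^T.

Definition has_gradient (f : 'M[R]_(m, n) -> R) (gradf : 'M[R]_(m, n) -> 'M[R]_(m, n)) : Prop :=
  forall X, differentiable f X /\ forall H, 'd f X H = frob_inner (gradf X) H.

Definition L_smooth (gradf : 'M[R]_(m, n) -> 'M[R]_(m, n)) (L : R) : Prop :=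
  forall X Y, frob (gradf X - gradf Y) <= L * frob (X - Y).

Fixpoint muonC {T : Type} (beta : R) (Cm1 : 'M[R]_(m, n))
  (Gb : nat -> T -> 'M[R]_(m, n)) (k : nat) (w : T) : 'M[R]_(m, n) :=
  match k with
  | 0 => beta *: Cm1 + Gb 0%N w
  | k'.+1 => beta *: muonC beta Cm1 Gb k' w + Gb k w
  end.

Definition muonM {T : Type} (beta : R) (Cm1 : 'M[R]_(m, n))
  (Gb : nat -> T -> 'M[R]_(m, n)) (k : nat) (w : T) : 'M[R]_(m, n) :=
  beta *: muonC beta Cm1 Gb k w + Gb k w.

Definition minibatch {T : Type} (B : nat) (G : nat -> 'I_B -> T -> 'M[R]_(m, n))
  (k : nat) (w : T) : 'M[R]_(m, n) :=
  (B%:R)^-1 *: \sum_(i < B) G k i w.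

End Defs.

(* Main.v *)
Require Import Defs.
From HB Require Import structures.
From mathcomp Require Import all_boot all_order all_algebra.
From mathcomp Require Import all_classical all_reals all_analysis.
Import Order.TTheory GRing.Theory Num.Theory.
Import numFieldNormedType.Exports.
Local Open Scope ring_scope.
From mathcomp Require Import ring lra.
Set Implicit Arguments. Unset Strict Implicit. Unset Printing Implicit Defensive.
Section Alg.
Context {R : realType} {m n : nat}.
Implicit Types A B C : 'M[R]_(m, n).

Lemma fiC A B : frob_inner A B = frob_inner B A.
Proof. by apply: eq_bigr => i _; apply: eq_bigr => j _; rewrite mulrC. Qed.

Lemma fiDl A B C : frob_inner (A + B) C = frob_inner A C + frob_inner B C.
Proof.
rewrite /frob_inner -big_split; apply: eq_bigr => i _.
rewrite -big_split; apply: eq_bigr => j _; by rewrite mxE mulrDl.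
Qed.

Lemma fiZl a A B : frob_inner (a *: A) B = a * frob_inner A B.
Proof.
rewrite /frob_inner mulr_sumr; apply: eq_bigr => i _.
rewrite mulr_sumr; apply: eq_bigr => j _; by rewrite mxE mulrA.
Qed.

Lemma fiNl A B : frob_inner (- A) B = - frob_inner A B.
Proof. by rewrite -scaleN1r fiZl mulN1r. Qed.

Lemma fiBl A B C : frob_inner (A - B) C = frob_inner A C - frob_inner B C.
Proof. by rewrite fiDl fiNl. Qed.

Lemma fiDr A B C : frob_inner C (A + B) = frob_inner C A + frob_inner C B.
Proof. by rewrite fiC fiDl !(fiC C). Qed.

Lemma fiZr a A B : frob_inner B (a *: A) = a * frob_inner B A.
Proof. by rewrite fiC fiZl fiC. Qed.

Lemma fiNr A B : frob_inner B (- A) = - frob_inner B A.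
Proof. by rewrite fiC fiNl fiC. Qed.

Lemma fiBr A B C : frob_inner C (A - B) = frob_inner C A - frob_inner C B.
Proof. by rewrite fiDr fiNr. Qed.

Lemma fi_ge0 A : 0 <= frob_inner A A.
Proof. by apply: sumr_ge0 => i _; apply: sumr_ge0 => j _; rewrite -expr2 sqr_ge0. Qed.

Lemma fi_eq0 A : frob_inner A A = 0 -> A = 0.
Proof.
move=> /eqP; rewrite psumr_eq0; last by move=> i _; apply: sumr_ge0 => j _; rewrite -expr2 sqr_ge0.
move=> /allP H; apply/matrixP => i j; rewrite mxE.
have := H i (mem_index_enum _); rewrite /=.
rewrite psumr_eq0; last by move=> k _; rewrite -expr2 sqr_ge0.
move=> /allP /(_ j (mem_index_enum _)) /=.
by rewrite mulf_eq0 orbb => /eqP.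
Qed.

Lemma fi0l B : frob_inner 0 B = 0.
Proof. by rewrite /frob_inner big1 // => i _; rewrite big1 // => j _; rewrite mxE mul0r. Qed.

Lemma fi0r B : frob_inner B 0 = 0.
Proof. by rewrite fiC fi0l. Qed.

Lemma frob_ge0 A : 0 <= frob A.
Proof. exact: sqrtr_ge0. Qed.

Lemma frob2 A : frob A ^+ 2 = frob_inner A A.
Proof. by rewrite sqr_sqrtr // fi_ge0. Qed.

Lemma frobZ a A : frob (a *: A) = `|a| * frob A.
Proof. by rewrite /frob fiZl fiZr mulrA -expr2 sqrtrM ?sqr_ge0 // sqrtr_sqr. Qed.

Lemma frobN A : frob (- A) = frob A.
Proof. by rewrite -scaleN1r frobZ normrN normr1 mul1r. Qed.

Lemma fi_CS A B : frob_inner A B <= frob A * frob B.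
Proof.
set a := frob A; set b := frob B.
have [a0|apos] := eqVneq a 0.
  have : frob_inner A A = 0 by rewrite -frob2 -/a a0 expr0n.
  by move/fi_eq0 => ->; rewrite fi0l mulr_ge0 // frob_ge0.
have [b0|bpos] := eqVneq b 0.
  have : frob_inner B B = 0 by rewrite -frob2 -/b b0 expr0n.
  by move/fi_eq0 => ->; rewrite fi0r mulr_ge0 // frob_ge0.
have a0 : 0 < a by rewrite lt_def apos frob_ge0.
have b0 : 0 < b by rewrite lt_def bpos frob_ge0.
have := fi_ge0 (b *: A - a *: B).
rewrite fiBl !fiBr !fiZl !fiZr -!frob2 -/a -/b (fiC B A).
set x := frob_inner A B => H.
have H2 : 0 <= 2 * a * b * (a * b - x).
  by rewrite (_ : 2 * a * b * (a * b - x) = b * (b * a ^+ 2) - b * (a * x) - (a * (b * x) - a * (a * b ^+ 2))) //; ring.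
move: H2; rewrite pmulr_rge0 ?subr_ge0 //.
by rewrite !mulr_gt0.
Qed.

Lemma frob_tri A B : frob (A + B) <= frob A + frob B.
Proof.
rewrite -(@ler_pXn2r _ 2) ?nnegrE ?addr_ge0 ?frob_ge0 //.
rewrite frob2 fiDl !fiDr (fiC B A) sqrrD -!frob2.
have := fi_CS A B; lra.
Qed.

End Alg.
Section Pol.
Context {R : realType} {m n : nat}.

Lemma fi_tr (A B : 'M[R]_(m, n)) : frob_inner A B = \tr (A^T *m B).
Proof.
rewrite /frob_inner /mxtrace exchange_big /=; apply: eq_bigr => j _.
by rewrite !mxE; apply: eq_bigr => i _; rewrite mxE.
Qed.

Variables (r : nat) (U : 'M[R]_(m, r)) (s : 'rV[R]_r) (V : 'M[R]_(n, r)).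
Hypotheses (HU : U^T *m U = 1%:M) (HV : V^T *m V = 1%:M).

Lemma polPP : frob_inner (U *m V^T) (U *m V^T) = r%:R.
Proof.
rewrite fi_tr trmx_mul trmxK !mulmxA -(mulmxA V) HU mulmx1 mxtrace_mulC HV.
by rewrite mxtrace1.
Qed.

Lemma polMP : frob_inner (U *m diag_mx s *m V^T) (U *m V^T) = \sum_i s 0 i.
Proof.
rewrite fi_tr !trmx_mul !trmxK tr_diag_mx !mulmxA -(mulmxA (V *m diag_mx s)) HU mulmx1.
by rewrite mxtrace_mulC mulmxA HV mul1mx mxtrace_diag.
Qed.

Lemma polMM : frob_inner (U *m diag_mx s *m V^T) (U *m diag_mx s *m V^T)
  = \sum_i s 0 i ^+ 2.
Proof.
rewrite fi_tr !trmx_mul !trmxK tr_diag_mx !mulmxA -(mulmxA (V *m diag_mx s)) HU mulmx1.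
rewrite mxtrace_mulC !mulmxA HV mul1mx mulmx_diag mxtrace_diag.
by apply: eq_bigr => i _; rewrite mxE expr2.
Qed.

Lemma pol_rank : (r <= minn m n)%N.
Proof.
rewrite leq_min; apply/andP; split.
  have := mxrankM_maxr U^T U; rewrite HU mxrank1 => /leq_trans; apply.
  exact: rank_leq_row.
have := mxrankM_maxr V^T V; rewrite HV mxrank1 => /leq_trans; apply.
exact: rank_leq_row.
Qed.

End Pol.
Section QD.
Context {R : realType}.
Lemma qd (a k t : R) : is_derive t (1:R) (fun t : R => t * a + t ^+ 2 * k) (a + 2 * t * k).
Proof.
have H := is_deriveD (is_deriveM (is_derive_id t (1:R)) (is_derive_cst a t 1))
   (is_deriveM (is_deriveX 2 (is_derive_id t (1:R))) (is_derive_cst k t 1)).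
have -> : (fun t : R => t * a + t ^+ 2 * k) = id * cst a + id ^+ 2 * cst k.
  apply/funext => x /=. by rewrite !fctE.
eapply is_derive_eq; first exact H.
rewrite /= !scaler0 !add0r /GRing.scale /= !mulr1 expr1. ring.
Qed.
End QD.

Section Desc.
Context {R : realType} {m n : nat}.
Variables (f : 'M[R]_(m, n) -> R) (gradf : 'M[R]_(m, n) -> 'M[R]_(m, n)) (L : R).
Hypotheses (Hg : has_gradient f gradf) (HL : L_smooth gradf L).

Lemma g_derive (X D : 'M[R]_(m, n)) (t : R) :
  is_derive t 1 (fun t : R => f (X + t *: D)) (frob_inner (gradf (X + t *: D)) D).
Proof.
have [df dfE] := Hg (X + t *: D).
have E : (fun h : R => h^-1 *: (((fun t : R => f (X + t *: D)) \o shift t) (h *: 1)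
           - f (X + t *: D)))
       = (fun h : R => h^-1 *: ((f \o shift (X + t *: D)) (h *: D) - f (X + t *: D))).
  apply/funext => h /=; congr (_ *: (f _ - _)).
  by rewrite /shift /= [h%:A]mulr1 scalerDl addrCA.
apply: DeriveDef.
  have := @diff_derivable _ _ _ _ _ D df; by rewrite /derivable E.
by rewrite /derive E -/(derive f (X + t *: D) D) deriveE.
Qed.

Lemma descent (X D : 'M[R]_(m, n)) :
  f (X + D) <= f X + frob_inner (gradf X) D + L / 2 * frob_inner D D.
Proof.
set a := frob_inner (gradf X) D; set c := frob_inner D D; set k := L / 2 * c.
pose h : R -> R := (fun t : R => f (X + t *: D)) - (fun t : R => t * a + t ^+ 2 * k).
have hd t : is_derive t (1:R) h (frob_inner (gradf (X + t *: D)) D - (a + 2 * t * k)).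
  exact: is_deriveB (g_derive X D t) (qd a k t).
have hder t : derivable h t 1 by case: (hd t).
have hle : forall t, t \in `]0, 1[ -> derive1 h t <= 0.
  move=> t; rewrite in_itv /= => /andP[t0 t1].
  rewrite derive1E; case: (hd t) => _ ->.
  suff H1 : frob_inner (gradf (X + t *: D) - gradf X) D <= 2 * t * k.
    by move: H1; rewrite fiBl -/a; lra.
  apply: (le_trans (fi_CS _ _)).
  apply: (le_trans (ler_wpM2r (frob_ge0 D) (HL _ _))).
  rewrite addrAC subrr add0r frobZ (ger0_norm (ltW t0)) /k /c -frob2.
  have -> : 2 * t * (L / 2 * frob D ^+ 2) = L * (t * frob D) * frob D.
    by rewrite expr2; field.
  by [].
have hc := @derivable_within_continuous R R^o h `[(0:R), 1]%R (fun t _ => hder t).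
have H0 := @ler0_derive1_le_cc R h 0 1 (fun t _ => hder t) hle hc 1 0.
have : h 1 <= h 0 by apply: H0; rewrite ?in_itv /= ?ler01 ?lexx.
rewrite /h !fctE /= scale0r addr0 scale1r mul0r expr0n /= mul0r addr0 subr0.
rewrite mul1r expr1n mul1r => H.
lra.
Qed.

End Desc.
Section Step.
Context {R : realType} {m n : nat}.

Lemma sum_sq_le (r : nat) (s : 'I_r -> R) : (forall i, 0 <= s i) ->
  \sum_i s i ^+ 2 <= (\sum_i s i) ^+ 2.
Proof.
move=> s0; rewrite expr2 mulr_suml; apply: ler_sum => i _.
rewrite mulr_sumr (bigD1 i) //= expr2 lerDl.
by apply: sumr_ge0 => j _; apply: mulr_ge0.
Qed.

Lemma L_nonneg (gradf : 'M[R]_(m, n) -> 'M[R]_(m, n)) L :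
  L_smooth gradf L -> (0 < minn m n)%N -> 0 <= L.
Proof.
move=> HL; rewrite leq_min => /andP[m0 n0].
pose E : 'M[R]_(m, n) := const_mx 1.
have Ep : 0 < frob E.
  rewrite lt_def frob_ge0 andbT; apply/eqP => /(congr1 (fun x => x ^+ 2)).
  rewrite frob2 expr0n /= => /fi_eq0 /matrixP /(_ (Ordinal m0) (Ordinal n0)).
  by rewrite !mxE => /eqP; rewrite oner_eq0.
have := HL E 0; rewrite subr0 => H.
have := le_trans (frob_ge0 _) H.
by rewrite pmulr_lge0.
Qed.

Lemma polar_facts (M Pm g : 'M[R]_(m, n)) (c : R) : 0 < c ->
  is_polar_factor M Pm ->
  frob g - (1 + Num.sqrt (minn m n)%:R) * frob (c *: M - g) <= frob_inner g Pm
  /\ exists r, frob_inner Pm Pm = r%:R /\ (r <= minn m n)%N.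
Proof.
move=> c0 [r [U [s [V [[HU HV hs HM] HP]]]]].
have rle := pol_rank HU HV.
split; last by exists r; rewrite HP (polPP HU HV).
set S := c *: M - g.
have gE : g = c *: M - S by rewrite /S opprB addrC subrK.
have MP : frob M <= frob_inner M Pm.
  rewrite HM HP (polMP s HU HV) /frob (polMM s HU HV).
  rewrite -(@ger0_norm _ (\sum_i s 0 i)); last by apply: sumr_ge0 => i _; apply: ltW.
  rewrite -sqrtr_sqr ler_sqrt; last by rewrite sqr_ge0.
  by apply: sum_sq_le => i; apply: ltW.
have PP : frob Pm <= Num.sqrt (minn m n)%:R.
  by rewrite /frob HP (polPP HU HV) ler_sqrt ?ler0n // ler_nat.
have SP := fi_CS S Pm.
have tri := frob_tri (c *: M) (- S).
rewrite frobN frobZ (gtr0_norm c0) -gE in tri.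
have fgP : frob_inner g Pm = c * frob_inner M Pm - frob_inner S Pm by rewrite gE fiBl fiZl.
rewrite fgP.
have S0 := frob_ge0 S.
have : frob S * frob Pm <= frob S * Num.sqrt (minn m n)%:R by apply: ler_wpM2l.
have : c * frob M <= c * frob_inner M Pm by apply: ler_wpM2l => //; apply: ltW.
lra.
Qed.

End Step.
Section Tele.
Context {R : realType}.
Lemma telesc (F a b : nat -> R) (eta q cc : R) (K : nat) :
  (forall k, F k.+1 <= F k - eta * a k + cc * b k + q) ->
  eta * \sum_(k < K) a k <= F 0%N - F K + K%:R * q + cc * \sum_(k < K) b k.
Proof.
move=> H; elim: K => [|K IH]; first by rewrite !big_ord0 !mulr0 subrr mul0r !addr0.
rewrite !big_ord_recr /= -addn1 natrD !mulrDr.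
rewrite mulrDl mul1r addn1; have := H K; lra.
Qed.
End Tele.

Theorem mainTheorem11
  (R : realType) (m n : nat)
  (f : 'M[R]_(m, n) -> R) (gradf : 'M[R]_(m, n) -> 'M[R]_(m, n))
  (fstar L beta eta : R) (B K : nat)
  (d : measure_display) (T : measurableType d) (P : probability T R)
  (G : nat -> 'I_B -> T -> 'M[R]_(m, n))
  (X0 Cm1 : 'M[R]_(m, n))
  (X : nat -> T -> 'M[R]_(m, n)) (Pol : nat -> T -> 'M[R]_(m, n)) :
  has_gradient f gradf ->
  (forall Y, fstar <= f Y) ->
  L_smooth gradf L ->
  0 < beta < 1 -> 0 < eta -> (0 < B)%N ->
  (* Muon iterates with exact polar decomposition *)
  (forall w, X 0%N w = X0) ->
  (forall k w, is_polar_factor (muonM beta Cm1 (minibatch G) k w) (Pol k w)) ->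
  (forall k w, X k.+1 w = X k w - eta *: Pol k w) ->
  (* all expectations are finite *)
  (forall k, P.-integrable setT (fun w => (frob (gradf (X k w)))%:E)) ->
  (forall k, P.-integrable setT (fun w =>
     (frob ((1 - beta) *: muonM beta Cm1 (minibatch G) k w - gradf (X k w)))%:E)) ->
  (1 <= K)%N ->
  (eta%:E * \sum_(k < K) \int[P]_w (frob (gradf (X k w)))%:E
   <= (f X0 - fstar + L * (minn m n)%:R / 2 * K%:R * eta ^+ 2)%:E
      + (eta * (1 + Num.sqrt (minn m n)%:R))%:E
        * \sum_(k < K) \int[P]_w
            (frob ((1 - beta) *: muonM beta Cm1 (minibatch G) k w - gradf (X k w)))%:E)%E.
Proof.
move=> Hg Hf HL /andP[b0 b1] eta0 B0 HX0 HPol HX Hia Hib K1.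
pose a k w := frob (gradf (X k w)).
pose b k w := frob ((1 - beta) *: muonM beta Cm1 (minibatch G) k w - gradf (X k w)).
pose d0 := minn m n.
have step k w : f (X k.+1 w) <= f (X k w) - eta * a k w
    + (eta * (1 + Num.sqrt d0%:R)) * b k w + L * d0%:R / 2 * eta ^+ 2.
  have c0 : 0 < 1 - beta by rewrite subr_gt0.
  have [H1 [r [Hr rle]]] := polar_facts (gradf (X k w)) c0 (HPol k w).
  have D := descent Hg HL (X k w) ((- eta) *: Pol k w).
  rewrite scaleNr -HX fiNr fiNl fiNr opprK !fiZr !fiZl Hr in D.
  have Lr : L * r%:R <= L * d0%:R.
    have [d00|d0p] := posnP d0.
      by move: rle; rewrite -/d0 d00 leqn0 => /eqP ->.
    by apply: ler_wpM2l; [exact: L_nonneg HL d0p | rewrite ler_nat].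
  have Lr2 : L * r%:R / 2 * eta ^+ 2 <= L * d0%:R / 2 * eta ^+ 2.
    by apply: ler_wpM2r; [rewrite sqr_ge0 | apply: ler_wpM2r].
  have H1' := ler_wpM2l (ltW eta0) H1.
  rewrite /a /b.
  have E2 : L / 2 * (eta * (eta * r%:R)) = L * r%:R / 2 * eta ^+ 2 by ring.
  move: D H1' Lr2; rewrite E2 -/d0.
  lra.
set C := f X0 - fstar + L * d0%:R / 2 * K%:R * eta ^+ 2.
set cc := eta * (1 + Num.sqrt d0%:R).
have ptw w : eta * \sum_(k < K) a k w <= C + cc * \sum_(k < K) b k w.
  have := telesc (F := fun k => f (X k w)) (a := fun k => a k w) (b := fun k => b k w)
    (eta := eta) (q := L * d0%:R / 2 * eta ^+ 2) (cc := cc) K (fun k => step k w).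
  rewrite /= HX0 /C; have := Hf (X K w); lra.
pose Fw w := (eta%:E * \sum_(k < K) (a k w)%:E)%E.
pose Gw w := (C%:E + cc%:E * \sum_(k < K) (b k w)%:E)%E.
have iF : P.-integrable setT Fw.
  by apply: (integrableZl measurableT); apply: (@integrable_sum _ _ _ _ _ measurableT 'I_K _ _ (fun k w => (a k w)%:E)) => k _; exact: Hia.
have iG : P.-integrable setT Gw.
  apply: integrableD => //; first exact: finite_measure_integrable_cst.
  by apply: (integrableZl measurableT); apply: (@integrable_sum _ _ _ _ _ measurableT 'I_K _ _ (fun k w => (b k w)%:E)) => k _; exact: Hib.
have eF : (\int[P]_w Fw w = eta%:E * \sum_(k < K) \int[P]_w (a k w)%:E)%E.
  rewrite integralZl //; last by apply: (@integrable_sum _ _ _ _ _ measurableT 'I_K _ _ (fun k w => (a k w)%:E)) => k _; exact: Hia.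
  by rewrite (@integral_sum _ _ _ _ _ measurableT 'I_K (fun k w => (a k w)%:E)) //; exact: Hia.
have eG : (\int[P]_w Gw w = C%:E + cc%:E * \sum_(k < K) \int[P]_w (b k w)%:E)%E.
  rewrite integralD //; first last.
  - by apply: (integrableZl measurableT); apply: (@integrable_sum _ _ _ _ _ measurableT 'I_K _ _ (fun k w => (b k w)%:E)) => k _; exact: Hib.
  - exact: finite_measure_integrable_cst.
  rewrite integral_cst //.
  rewrite [X in (C%:E * X)%E](_ : _ = 1%E); last exact: probability_setT.
  rewrite mule1 integralZl //; last first.
    by apply: (@integrable_sum _ _ _ _ _ measurableT 'I_K _ _ (fun k w => (b k w)%:E)) => k _; exact: Hib.
  by rewrite (@integral_sum _ _ _ _ _ measurableT 'I_K (fun k w => (b k w)%:E)) //; exact: Hib.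
rewrite -eF -eG; apply: le_integral => // w _.
by rewrite /Fw /Gw !sumEFin -EFinM -EFinM -EFinD lee_fin ptw.
Qed.
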